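(* For an arbitrary integer $k\ge 3$ and an arbitrary integer $n$ with $\frac{k+1}{2} \leq n \leq k$, there exists a finite simple graph $G$ with an edge $e$ such that $\chi_\rho(G)=k$ and $\chi_\rho(G-e)=n$.
   Context: A $k$-packing coloring of a graph $G$ is a map $c:V(G)\to\{1,\ldots,k\}$ such that two distinct vertices $u,v$ with $c(u)=c(v)=i$ satisfy $d_G(u,v)>i$ (distance between vertices in different components is infinite). The packing chromatic number $\chi_\rho(G)$ is the smallest $k$ for which $G$ admits a $k$-packing coloring. $G-e$ denotes the graph obtained by deleting the edge $e$. *)

(* Defs.v *)
From mathcomp Require Import all_boot.
Set Implicit Arguments. Unset Strict Implicit. Unset Printing Implicit Defensive.

Definition simple_graph (T : finType) (g : rel T) : Prop :=
  irreflexive g /\ symmetric g.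

(* d_G(u,v) <= d : there is a walk (hence a path) from u to v with at most d edges.
   If u, v are in different components this never holds (distance = infinity). *)
Definition within_dist (T : finType) (g : rel T) (d : nat) (u v : T) : Prop :=
  exists p : seq T, [/\ path g u p, last u p = v & size p <= d].

Definition packing_coloring (T : finType) (g : rel T) (k : nat) (c : T -> nat) : Prop :=
  (forall x, 1 <= c x <= k) /\
  (forall u v, u != v -> c u = c v -> ~ within_dist g (c u) u v).

Definition packing_colorable (T : finType) (g : rel T) (k : nat) : Prop :=
  exists c : T -> nat, packing_coloring g k c.

Definition packing_chromatic_number_is (T : finType) (g : rel T) (k : nat) : Prop :=
  packing_colorable g k /\ forall j, packing_colorable g j -> k <= j.

Definition delete_edge (T : finType) (g : rel T) (x y : T) : rel T :=
  fun a b => g a b && ~~ (((a == x) && (b == y)) || ((a == y) && (b == x))).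

(* Main.v *)
Require Import Defs.
From mathcomp Require Import all_boot.
From mathcomp Require Import zify.
Set Implicit Arguments. Unset Strict Implicit. Unset Printing Implicit Defensive.


Lemma wd0 (T : finType) (g : rel T) d u : within_dist g d u u.
Proof. by exists [::]. Qed.

Lemma wd_edge (T : finType) (g : rel T) d u v : 0 < d -> g u v -> within_dist g d u v.
Proof. by move=> hd huv; exists [:: v]; split => //=; rewrite huv. Qed.

Lemma wd_mono (T : finType) (g : rel T) d d' u v :
  d <= d' -> within_dist g d u v -> within_dist g d' u v.
Proof. move=> hd [p [hp hl hs]]; exists p; split => //; exact: leq_trans hs hd. Qed.

Lemma wd_cat (T : finType) (g : rel T) d1 d2 u w v :
  within_dist g d1 u w -> within_dist g d2 w v -> within_dist g (d1 + d2) u v.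
Proof.
move=> [p [hp hl hs]] [q [hq hl' hs']]; exists (p ++ q); split.
- by rewrite cat_path hp hl hq.
- by rewrite last_cat hl hl'.
- by rewrite size_cat leq_add.
Qed.

Lemma wd1_of (T : finType) (g : rel T) u v : u = v \/ g u v -> within_dist g 1 u v.
Proof. by case=> [->|h]; [exact: wd0 | exact: wd_edge]. Qed.

Lemma wd1_inv (T : finType) (g : rel T) u v : within_dist g 1 u v -> u = v \/ g u v.
Proof.
move=> [[|w [|w' p]] [hp hl hs]] //=; first by left.
by right; move: hp hl => /= /andP[h _] <-.
Qed.

Lemma wd1_sym (T : finType) (g : rel T) u v : symmetric g ->
  within_dist g 1 u v -> within_dist g 1 v u.
Proof. by move=> hs /wd1_inv [->|h]; apply: wd1_of; [left | right; rewrite (hs v u)]. Qed.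

Lemma wd2_inv (T : finType) (g : rel T) u v : within_dist g 2 u v ->
  [\/ u = v, g u v | exists w, g u w /\ g w v].
Proof.
move=> [[|w [|w' [|w'' p]]] [hp hl hs]] //=; first by constructor 1.
- by constructor 2; move: hp hl => /= /andP[h _] <-.
- by constructor 3; exists w; move: hp hl => /= /and3P[h1 h2 _] <-.
Qed.

Lemma pc_conf (T : finType) (g : rel T) k c u v d : packing_coloring g k c ->
  u != v -> c u = c v -> d <= c u -> within_dist g d u v -> False.
Proof. move=> [_ H] huv e hd hw; apply: (H u v huv e); exact: wd_mono hd hw. Qed.

Lemma count_two (T : finType) (c : T -> nat) j (L : seq nat) (A B : {set T}) :
  (forall v, 1 <= c v <= j) -> {in A &, injective c} -> {in B &, injective c} ->
  (forall u v, u \in A -> v \in B -> c u = c v -> c u \in L) ->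
  #|A| + #|B| <= j + size L.
Proof.
move=> Hr iA iB Hx.
pose f := fun v => (inord (c v) : 'I_j.+1).
have fE v : (f v : nat) = c v by rewrite /f inordK // ltnS; case/andP: (Hr v).
have fI (C : {set T}) : {in C &, injective c} -> #|f @: C| = #|C|.
  move=> iC; apply: card_in_imset => u v uC vC /(congr1 (@nat_of_ord _)); rewrite !fE; exact: iC.
have hU : #|f @: A :|: f @: B| <= j.
  have sub : f @: A :|: f @: B \subset [set~ ord0].
    apply/subsetP => i; rewrite !inE => /orP[] /imsetP[v _ ->]; apply/eqP => /(congr1 (@nat_of_ord _));
    rewrite fE /=; have := Hr v; lia.
  by have := subset_leq_card sub; rewrite cardsC1 card_ord.
have hI : #|f @: A :&: f @: B| <= size L.
  have sub : f @: A :&: f @: B \subset [set i in map (fun x => inord x : 'I_j.+1) L].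
    apply/subsetP => i; rewrite !inE => /andP[/imsetP[u uA ->] /imsetP[v vB e]].
    have cuv : c u = c v by rewrite -!fE e.
    apply/mapP; exists (c u); first exact: Hx uA vB cuv.
    by apply: val_inj => /=; rewrite inordK // ltnS; case/andP: (Hr u).
  apply: leq_trans (subset_leq_card sub) _.
  rewrite cardsE; apply: leq_trans (card_size _) _. by rewrite size_map.
have := cardsUI (f @: A) (f @: B). rewrite !fI //. lia.
Qed.

Lemma clique_bound (T : finType) (g : rel T) j c (Q : {set T}) :
  packing_coloring g j c -> {in Q &, forall u v, u != v -> g u v} -> #|Q| <= j.
Proof.
move=> pc hQ.
suff: #|Q| + #|@set0 T| <= j + size (@nil nat) by rewrite cards0 !addn0.
apply: count_two (proj1 pc) _ _ _.
- move=> u v uQ vQ e; case: (eqVneq u v) => // huv; exfalso.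
  apply: (pc_conf (d:=1) pc huv e _ (wd_edge _ (hQ u v uQ vQ huv))) => //.
  by case/andP: (proj1 pc u).
- by move=> u v; rewrite inE.
- by move=> u v _; rewrite inE.
Qed.

Lemma pc_sub (T : finType) (g : rel T) x y k c :
  packing_coloring g k c -> packing_coloring (delete_edge g x y) k c.
Proof.
move=> [hr H]; split=> // u v huv e [p [hp hl hs]]; apply: (H u v huv e); exists p; split=> //.
by apply: sub_path hp => a b; rewrite /delete_edge; case/andP.
Qed.
Notation V b := (bool * 'I_b.+1 * 'I_3)%type.
Definition sz (a b : nat) (s : bool) := if s then b else a.

Definition gr (a b : nat) : rel (V b) := fun u v =>
  [|| [&& u.1.1 == v.1.1, u.1.2 < sz a b u.1.1, v.1.2 < sz a b u.1.1,
          u.1.2 != v.1.2 :> nat, u.2 == 0 :> nat & v.2 == 0 :> nat],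
      [&& u.1.1 == v.1.1, u.1.2 == v.1.2 :> nat, u.1.2 < sz a b u.1.1,
          u.1.2 != 0 :> nat & (u.2 == 0 :> nat) != (v.2 == 0 :> nat)]
    | [&& u.1.1 != v.1.1, u.1.2 == 0 :> nat, v.1.2 == 0 :> nat,
          u.2 == 0 :> nat & v.2 == 0 :> nat]].

Definition bx (b : nat) (s : bool) : V b := (s, ord0, ord0).
Arguments gr : clear implicits.
Arguments bx : clear implicits.

Ltac dv u := let s := fresh "s" in let i := fresh "i" in let hi := fresh "hi" in
  let l := fresh "l" in let hl := fresh "hl" in
  case: u => [[s [i hi]] [l hl]]; case: s.

Ltac crunch := rewrite /gr /sz /bx /= ?xpair_eqE -?val_eqE /=; lia.

Lemma gr_irr (a b : nat) : irreflexive (gr a b).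
Proof. move=> u; dv u; crunch. Qed.

Lemma gr_sym (a b : nat) : symmetric (gr a b).
Proof. move=> u v; dv u; dv v; apply/idP/idP; crunch. Qed.

Definition K (a b : nat) (s : bool) : {set V b} :=
  [set v : V b | (v.1.1 == s) && (v.1.2 < sz a b s) && (v.2 == 0 :> nat)].
Arguments K : clear implicits.

Definition cg (a b : nat) (v : V b) : nat :=
  if (v.2 == 0 :> nat) && (v.1.2 < sz a b v.1.1) then
    (if v.1.1 then (if v.1.2 == 0 :> nat then a + 1 else if v.1.2 == 1 :> nat then 2 else a + v.1.2)
     else v.1.2 + 1)
  else 1.
Definition ce (a b : nat) (v : V b) : nat :=
  if (v.2 == 0 :> nat) && (v.1.2 < sz a b v.1.1) then v.1.2 + 1 else 1.
Arguments cg : clear implicits.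
Arguments ce : clear implicits.

Ltac crunch2 := rewrite /gr /sz /bx /K /cg /ce /delete_edge ?inE /= ?xpair_eqE -?val_eqE /=;
  repeat (case: ifP => /= ?); lia.

Lemma K_edge (a b : nat) s u v : u \in K a b s -> v \in K a b s -> u != v -> gr a b u v.
Proof. dv u; dv v; case: s; crunch2. Qed.

Lemma bx_K (a b : nat) s : 0 < a -> a <= b -> bx b s \in K a b s.
Proof. case: s; crunch2. Qed.

Lemma gr_bx (a b : nat) : gr a b (bx b false) (bx b true).
Proof. crunch2. Qed.

Lemma K_side (a b : nat) s u : u \in K a b s -> u.1.1 == s.
Proof. dv u; case: s; crunch2. Qed.

Lemma K_nbx (a b : nat) s u : u \in K a b s -> u != bx b s -> u.1.2 != 0 :> nat.
Proof. dv u; case: s; crunch2. Qed.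

Lemma pd_edge (a b : nat) s t (l : 'I_3) : t \in K a b s -> t.1.2 != 0 :> nat -> l != 0 :> nat ->
  gr a b t (t.1.1, t.1.2, l).
Proof. case: l => l0 hl0; dv t; case: s; crunch2. Qed.

Lemma pd_notK (a b : nat) s s' t (l : 'I_3) : l != 0 :> nat -> (s', t, l) \notin K a b s.
Proof. case: l => l hl; case: s; crunch2. Qed.

Lemma cg_range (a b : nat) v : 2 <= a -> a <= b -> 1 <= cg a b v <= a + b - 1.
Proof. dv v; crunch2. Qed.

Lemma ce_range (a b : nat) v : 1 <= a -> a <= b -> 1 <= ce a b v <= b.
Proof. dv v; crunch2. Qed.

Lemma cg_inj (a b : nat) u v : 2 <= a -> a <= b -> cg a b u = cg a b v -> 3 <= cg a b u -> u == v.
Proof. dv u; dv v; crunch2. Qed.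

Lemma cg1_nadj (a b : nat) u v : 2 <= a -> a <= b -> cg a b u = 1 -> cg a b v = 1 -> ~~ gr a b u v.
Proof. dv u; dv v; crunch2. Qed.

Lemma cg2_nadj (a b : nat) u v : 2 <= a -> a <= b -> cg a b u = 2 -> cg a b v = 2 -> ~~ gr a b u v.
Proof. dv u; dv v; crunch2. Qed.

Lemma cg2_side (a b : nat) u w : 2 <= a -> a <= b -> cg a b u = 2 -> gr a b u w -> w.1.1 == u.1.1.
Proof. dv u; dv w; crunch2. Qed.

Lemma cg2_same (a b : nat) u v : 2 <= a -> a <= b -> cg a b u = 2 -> cg a b v = 2 ->
  u.1.1 == v.1.1 -> u == v.
Proof. dv u; dv v; crunch2. Qed.

Lemma ce_inj2 (a b : nat) u v : 1 <= a -> a <= b -> ce a b u = ce a b v -> 2 <= ce a b u ->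
  u.1.1 == v.1.1 -> u == v.
Proof. dv u; dv v; crunch2. Qed.

Lemma ce1_nadj (a b : nat) u v : 1 <= a -> a <= b -> ce a b u = 1 -> ce a b v = 1 ->
  u.1.1 == v.1.1 -> ~~ gr a b u v.
Proof. dv u; dv v; crunch2. Qed.

Lemma dgr_side (a b : nat) u v :
  delete_edge (gr a b) (bx b false) (bx b true) u v -> u.1.1 == v.1.1.
Proof. dv u; dv v; crunch2. Qed.

Lemma K_dedge (a b : nat) u v : u \in K a b true -> v \in K a b true -> u != v ->
  delete_edge (gr a b) (bx b false) (bx b true) u v.
Proof. dv u; dv v; crunch2. Qed.
Lemma path_side (a b : nat) u p :
  path (delete_edge (gr a b) (bx b false) (bx b true)) u p -> (last u p).1.1 = u.1.1.
Proof.
elim: p u => //= w p IH u /andP[huw hp].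
by rewrite IH //; move/eqP: (dgr_side huw).
Qed.

Lemma ce_ok (a b : nat) : 1 <= a -> a <= b ->
  packing_coloring (delete_edge (gr a b) (bx b false) (bx b true)) b (ce a b).
Proof.
move=> ha hab; split; first by move=> v; exact: ce_range.
move=> u v huv e [p [hp hl hs]].
have sd : u.1.1 == v.1.1 by rewrite -hl (path_side hp).
case: (ltnP 1 (ce a b u)) => hc.
- by move: huv; rewrite (eqP (ce_inj2 ha hab e hc sd)) eqxx.
- have c1 : ce a b u = 1 by have := ce_range u ha hab; lia.
  rewrite c1 in hs; move: hp hl; case: p hs => [|w [|]] //= _.
  + by move=> _ hl; rewrite hl eqxx in huv.
  + rewrite andbT => /andP[huw _] hw; subst w.
    by have := ce1_nadj ha hab c1 (etrans (esym e) c1) sd; rewrite huw.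
Qed.

Lemma cg_ok (a b : nat) : 2 <= a -> a <= b -> packing_coloring (gr a b) (a + b - 1) (cg a b).
Proof.
move=> ha hab; split; first by move=> v; exact: cg_range.
move=> u v huv e hw.
case: (ltnP 2 (cg a b u)) => hc.
- by move: huv; rewrite (eqP (cg_inj ha hab e hc)) eqxx.
- case: (eqVneq (cg a b u) 1) => c1.
  + rewrite c1 in hw; case/wd1_inv: hw => [h|h]; first by rewrite h eqxx in huv.
    by have := cg1_nadj ha hab c1 (etrans (esym e) c1); rewrite h.
  + have c2 : cg a b u = 2 by have := cg_range u ha hab; lia.
    have c2' : cg a b v = 2 by rewrite -e.
    rewrite c2 in hw; case/wd2_inv: hw => [h|h|[w [h1 h2]]].
    * by rewrite h eqxx in huv.
    * by have := cg2_nadj ha hab c2 c2'; rewrite h.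
    * have s1 := cg2_side ha hab c2 h1.
      have h2' : gr a b v w by rewrite gr_sym.
      have s2 := cg2_side ha hab c2' h2'.
      have := cg2_same ha hab c2 c2'; rewrite -(eqP s1) (eqP s2) eqxx => /(_ isT) h.
      by rewrite h in huv.
Qed.

Lemma cardK (a b : nat) s : a <= b -> sz a b s <= #|K a b s|.
Proof.
move=> hab; have hsz : sz a b s <= b by case: s => /=; lia.
have -> : sz a b s = #|[set ((s, inord i, ord0) : V b) | i : 'I_(sz a b s)]|.
  rewrite card_imset ?card_ord // => i i' /= [] /(congr1 (@nat_of_ord _)).
  rewrite !inordK => [/val_inj //| |]; apply: (leq_trans (ltn_ord _)); lia.
apply: subset_leq_card; apply/subsetP => v /imsetP[i _ ->].
rewrite inE /= eqxx inordK //; last by apply: (leq_trans (ltn_ord _)); lia.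
by rewrite ltn_ord.
Qed.

Lemma lowerG (a b : nat) j c : 2 <= a -> a <= b -> packing_coloring (gr a b) j c -> a + b - 1 <= j.
Proof.
move=> ha hab pc; have [hr _] := pc.
have hsym := @gr_sym a b.
have injK s : {in K a b s &, injective c}.
  move=> u v uK vK e; case: (eqVneq u v) => // huv; exfalso.
  apply: (pc_conf (d:=1) pc huv e _ (wd_edge _ (K_edge uK vK huv))) => //.
  by case/andP: (hr u).
have bK s : bx b s \in K a b s by apply: bx_K => //; lia.
have near s u : u \in K a b s -> within_dist (gr a b) 1 u (bx b s).
  move=> uK; apply: wd1_of; case: (eqVneq u (bx b s)) => [->|h]; [by left | right].
  exact: K_edge uK (bK s) h.
have near' s u : u \in K a b s -> within_dist (gr a b) 1 (bx b s) u.
  by move=> uK; apply: wd1_sym => //; exact: near.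
have bridge s : within_dist (gr a b) 1 (bx b s) (bx b (~~ s)).
  apply: wd_edge => //; case: s => /=; [rewrite hsym|]; exact: gr_bx.
have ne_side (s : bool) (u v : V b) : u.1.1 == s -> v.1.1 == ~~ s -> u != v.
  move=> /eqP hu /eqP hv; apply/eqP => huv; move: hv; rewrite -huv hu.
  by case: s {hu}.
have cK s : sz a b s <= #|K a b s| by exact: cardK.
have ssum s : sz a b s + sz a b (~~ s) = a + b by case: s => /=; lia.
case: (boolP [exists s, exists t, (t \in K a b s) && (t != bx b s) && (c t == 1)]).
- case/existsP => s /existsP [t /andP[/andP[tK tnb] /eqP ct1]].
  have ti := K_nbx tK tnb.
  pose p : V b := (t.1.1, t.1.2, inord 1).
  pose p' : V b := (t.1.1, t.1.2, inord 2).
  have tp : gr a b t p by apply: (pd_edge tK ti); rewrite inordK.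
  have tp' : gr a b t p' by apply: (pd_edge tK ti); rewrite inordK.
  have pK s' : p \notin K a b s' by apply: pd_notK; rewrite inordK.
  have pK' s' : p' \notin K a b s' by apply: pd_notK; rewrite inordK.
  have pp' : p != p'.
    by apply/eqP => /(congr1 (fun v : V b => nat_of_ord v.2)); rewrite /= !inordK.
  have tnp : t != p by apply: contraNneq (pK s) => <-.
  have tnp' : t != p' by apply: contraNneq (pK' s) => <-.
  pose A := p |: (p' |: K a b s).
  pose B := K a b (~~ s).
  have nearA u : u \in A -> within_dist (gr a b) 1 u t /\ within_dist (gr a b) 1 t u.
    rewrite !in_setU1 => /orP[/eqP->|/orP[/eqP->|uK]].
    - by split; apply: wd1_of; right; rewrite // hsym.
    - by split; apply: wd1_of; right; rewrite // hsym.
    - have h : within_dist (gr a b) 1 u t.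
        apply: wd1_of; case: (eqVneq u t) => [->|h]; [by left | right]; exact: K_edge uK tK h.
      by split => //; apply: wd1_sym.
  have cp1 : c p != 1.
    apply/eqP => cp; apply: (pc_conf (d:=1) pc tnp (etrans ct1 (esym cp)) _ (wd_edge _ tp)) => //.
    by rewrite ct1.
  have cp1' : c p' != 1.
    apply/eqP => cp; apply: (pc_conf (d:=1) pc tnp' (etrans ct1 (esym cp)) _ (wd_edge _ tp')) => //.
    by rewrite ct1.
  have AK u : u \in A -> c u = 1 -> u \in K a b s.
    rewrite !in_setU1 => /orP[/eqP->|/orP[/eqP->|//]] h; by [rewrite h in cp1 | rewrite h in cp1'].
  have injA : {in A &, injective c}.
    move=> u v uA vA e; case: (eqVneq u v) => // huv; exfalso.
    have w2 : within_dist (gr a b) (1 + 1) u v := wd_cat (nearA u uA).1 (nearA v vA).2.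
    case: (ltnP 1 (c u)) => hc; first exact: pc_conf pc huv e hc w2.
    have cu1 : c u = 1 by have := hr u; lia.
    have cv1 : c v = 1 by rewrite -e.
    by move: huv; rewrite (injK s u v (AK u uA cu1) (AK v vA cv1) e) eqxx.
  have Aside u : u \in A -> u.1.1 == s.
    rewrite !in_setU1 => /orP[/eqP->|/orP[/eqP->|uK]]; last exact: K_side uK.
    - exact: K_side tK.
    - exact: K_side tK.
  have cross u v : u \in A -> v \in B -> c u = c v -> c u \in [:: 1; 2; 3].
    move=> uA vB e; have huv := ne_side s u v (Aside u uA) (K_side vB).
    have w4 : within_dist (gr a b) (1 + 1 + 1 + 1) u v :=
      wd_cat (wd_cat (wd_cat (nearA u uA).1 (near s t tK)) (bridge s)) (near' _ v vB).
    case: (leqP 4 (c u)) => hc; first by exfalso; exact: pc_conf pc huv e hc w4.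
    by rewrite !inE; have := hr u; lia.
  have := count_two hr injA (injK (~~ s)) cross.
  have cA : #|A| = #|K a b s| + 2.
    by rewrite /A cardsU1 cardsU1 !in_setU1 negb_or pp' (negbTE (pK s)) (negbTE (pK' s)) /= addnA addnC.
  have := cK s; have := cK (~~ s); have := ssum s; rewrite cA /B /=.
  set x := #|K a b s|; set y := #|K a b (~~ s)|; lia.
- move=> /existsPn H.
  have H' s t : t \in K a b s -> c t = 1 -> t = bx b s.
    move=> tK ct; have := existsPn (H s) t; rewrite tK ct eqxx andbT /= negbK.
    by move/eqP.
  have cross u v : u \in K a b false -> v \in K a b true -> c u = c v -> c u \in [:: 2].
    move=> uK vK e; have huv := ne_side false u v (K_side uK) (K_side vK).
    have w3 : within_dist (gr a b) (1 + 1 + 1) u v :=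
      wd_cat (wd_cat (near false u uK) (bridge false)) (near' _ v vK).
    case: (leqP 3 (c u)) => hc; first by exfalso; exact: pc_conf pc huv e hc w3.
    case: (eqVneq (c u) 1) => c1.
    + exfalso; have hu := H' _ _ uK c1; have hv := H' _ _ vK (etrans (esym e) c1).
      subst u v; apply: (pc_conf (d:=1) pc huv e _ (bridge false)).
      by rewrite c1.
    + by rewrite !inE; have := hr u; lia.
  have := count_two hr (injK false) (injK true) cross.
  have := cK false; have := cK true; rewrite /=.
  set x := #|K a b false|; set y := #|K a b true|; lia.
Qed.

Lemma lowerGe (a b : nat) j c : 1 <= a -> a <= b ->
  packing_coloring (delete_edge (gr a b) (bx b false) (bx b true)) j c -> b <= j.
Proof.
move=> ha hab pc.
have := clique_bound (Q := K a b true) pc.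
have := cardK true hab; rewrite /=.
move=> h1 h2; apply: leq_trans h1 (h2 _).
by move=> u v uK vK; exact: K_dedge.
Qed.

Definition hr (m : nat) : rel (option 'I_m.+1) := fun u v =>
  match u, v with
  | Some i, Some j => i != j
  | None, Some i => i == 0 :> nat
  | Some i, None => i == 0 :> nat
  | None, None => false
  end.
Definition ch (m : nat) (u : option 'I_m.+1) : nat :=
  match u with None => 1 | Some i => if i == 0 :> nat then m.+1 else i end.
Arguments hr : clear implicits.
Arguments ch : clear implicits.

Lemma someNone (T : eqType) (x : T) : (Some x == None) = false.
Proof. by []. Qed.
Lemma noneSome (T : eqType) (x : T) : (None == Some x) = false.
Proof. by []. Qed.

Ltac dvo u := let i := fresh "i" in let hi := fresh "hi" in case: u => [[i hi]|].
Ltac crunch3 := rewrite /hr /ch /delete_edge /= ?inE /= ?(inj_eq (@Some_inj _)) ?someNone ?noneSome -?val_eqE /=; repeat (case: ifP => /= ?); lia.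

Lemma hr_irr m : irreflexive (hr m).
Proof. move=> u; dvo u; crunch3. Qed.

Lemma hr_sym m : symmetric (hr m).
Proof. move=> u v; dvo u; dvo v; apply/idP/idP; crunch3. Qed.

Lemma ch_range m v : 1 <= ch m v <= m.+1.
Proof. dvo v; crunch3. Qed.

Lemma ch_eq m u v : 0 < m -> u != v -> ch m u = ch m v -> (ch m u == 1) && ~~ hr m u v.
Proof. dvo u; dvo v; crunch3. Qed.

Lemma ch_ok m : 0 < m -> packing_coloring (hr m) m.+1 (ch m).
Proof.
move=> hm; split; first exact: ch_range.
move=> u v huv e hw; case/andP: (ch_eq hm huv e) => /eqP c1 nh.
rewrite c1 in hw; case/wd1_inv: hw => [h|h]; first by rewrite h eqxx in huv.
by rewrite h in nh.
Qed.

Lemma hr_dedge m u v : u != None -> v != None -> u != v ->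
  delete_edge (hr m) None (Some ord0) u v.
Proof. dvo u; dvo v; crunch3. Qed.

Lemma hr_lower m j c : packing_coloring (delete_edge (hr m) None (Some ord0)) j c -> m.+1 <= j.
Proof.
move=> pc; have := clique_bound (Q := [set~ None]) pc.
rewrite cardsC1 card_option card_ord /=; apply.
move=> u v; rewrite !inE; exact: hr_dedge.
Qed.

Theorem theorem2p2 (k n : nat) :
  3 <= k -> k + 1 <= 2 * n -> n <= k ->
  exists (T : finType) (g : rel T) (x y : T),
    [/\ simple_graph g, g x y,
        packing_chromatic_number_is g k
      & packing_chromatic_number_is (delete_edge g x y) n].
Proof.
move=> hk h2n hnk.
case: (eqVneq n k) => [enk | nek].
- subst n; case: k hk h2n hnk => [|m] // hk _ _.
  exists (option 'I_m.+1), (hr m), None, (Some ord0); split.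
  + split; [exact: hr_irr | exact: hr_sym].
  + by [].
  + split; first by exists (ch m); apply: ch_ok; lia.
    by move=> j [c pc]; apply: (hr_lower (c := c)); exact: pc_sub.
  + split; first by exists (ch m); apply: pc_sub; apply: ch_ok; lia.
    by move=> j [c pc]; exact: hr_lower pc.
- have hn : n < k by rewrite ltn_neqAle nek hnk.
  pose a := k - n + 1.
  have ha : 2 <= a by rewrite /a; lia.
  have hab : a <= n by rewrite /a; lia.
  have hka : k = a + n - 1 by rewrite /a; lia.
  exists (V n), (gr a n), (bx n false), (bx n true); split.
  + split; [exact: gr_irr | exact: gr_sym].
  + exact: gr_bx.
  + rewrite hka; split; first by exists (cg a n); exact: cg_ok.
    by move=> j [c pc]; exact: lowerG pc.
  + split; first by exists (ce a n); apply: ce_ok => //; lia.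
    by move=> j [c pc]; apply: lowerGe pc => //; lia.
Qed.
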